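(* Let $\Omega\subset\mathbb{R}^N$ be a bounded domain with smooth boundary, $0<s<1$, $M$ a Young function satisfying $1<m_0:=\inf_{t>0}\frac{tm(t)}{M(t)}\le m^0:=\sup_{t>0}\frac{tm(t)}{M(t)}<\infty$, (S) $t\mapsto M(\sqrt t)$ convex on $[0,\infty)$, and (Q) $\lim_{t\to+\infty}|t|^q/M(t)=0$, where $1<q<\min(p^*,m_0)$, $p^*=Np/(N-p)$ for a fixed $1<p<N$. Let $g:\Omega\times\mathbb{R}\to\mathbb{R}$ be Carathéodory with $G(x,t)=\int_0^t g(x,\tau)d\tau$ satisfying (A) $|g(x,t)|\le C_0|t|^{q-1}$ and (B) $C_1|t|^q\le G(x,t)\le C_2|t|^q$ for all $x\in\Omega,t\in\mathbb{R}$, with $C_0,C_1,C_2>0$. Let $$I_\lambda(u)=\int_{\mathbb{R}^N}\int_{\mathbb{R}^N}M\Big(\frac{u(x)-u(y)}{|x-y|^s}\Big)\frac{dx\,dy}{|x-y|^N}-\lambda\int_\Omega G(x,u)\,dx.$$ Then there exists $\lambda^*>0$ such that for every $\lambda\in(0,\lambda^* )$ there exist $\rho>0$ and $\alpha>0$ with $I_\lambda(u)\ge\alpha$ for all $u\in\tilde W^{s,M}_0(\Omega)$ with $\|u\|=\rho$.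
   Context: A Young function is $M(t)=\int_0^{|t|}m(\tau)\,d\tau$, where $m:\mathbb{R}\to\mathbb{R}$ is an increasing homeomorphism of $\mathbb{R}$ onto $\mathbb{R}$ with $m(0)=0$, $m(t)>0$ for $t>0$, $m(t)\to\infty$ as $t\to\infty$. $L^M$ is the Orlicz space with Luxemburg norm $\|u\|_{(M)}=\inf\{\lambda>0:\int M(u/\lambda)\le1\}$. $W^{s,M}(\mathbb{R}^N)$ is the set of $u\in L^M(\mathbb{R}^N)$ with $\int\int M\big(\frac{u(x)-u(y)}{|x-y|^s}\big)\frac{dxdy}{|x-y|^N}<\infty$, with seminorm $[u]_{(s,M)}=\inf\{\lambda>0:\int\int M\big(\frac{u(x)-u(y)}{\lambda|x-y|^s}\big)\frac{dxdy}{|x-y|^N}\le1\}$ and norm $\|u\|_{(s,M)}=\|u\|_{(M)}+[u]_{(s,M)}$. $\tilde W^{s,M}_0(\Omega)$ is the space of functions in the closure $W^{s,M}_0(\Omega)$ of $C_c^\infty(\Omega)$ in $\|\cdot\|_{(s,M)}$ which vanish a.e. in $\mathbb{R}^N\setminus\Omega$, normed by $\|u\|=[u]_{(s,M)}$. *)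

(* Defs.v *)
From mathcomp Require Import all_boot all_order all_algebra.
From mathcomp Require Import all_classical all_reals all_analysis.
Set Implicit Arguments. Unset Strict Implicit. Unset Printing Implicit Defensive.
Import Order.TTheory GRing.Theory Num.Theory.
Local Open Scope ring_scope.
Local Open Scope classical_set_scope.

(* R^N, represented as row vectors, with its canonical (normed) topology. *)
Notation Rn R N := (matrix_matrix__canonical__normed_module_NormedModule R 1 N).

Section Defs.
Variables (R : realType) (N : nat).
Implicit Types (x y : Rn R N) (u : Rn R N -> R).

Definition enorm x : R := Num.sqrt (\sum_(i < N) (x 0 i) ^+ 2).

Definition borelRn : set (set (Rn R N)) := <<s open >>.
Definition borel_fun u : Prop :=
  forall B : set R, measurable B -> borelRn (u @^-1` B).

Definition setcoord x (k : nat) (t : R) : Rn R N :=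
  \row_(j < N) (if (j : nat) == k then t else x 0 j).

(* Lebesgue integral over R^N of a nonnegative function, computed as an
   iterated one-dimensional Lebesgue integral (Tonelli). *)
Fixpoint iint (k : nat) (f : Rn R N -> \bar R) (x : Rn R N) : \bar R :=
  match k with
  | 0 => f x
  | k'.+1 => (\int[@lebesgue_measure R]_(t in [set: R]) iint k' f (setcoord x k' t))%E
  end.
Definition intRn (f : Rn R N -> \bar R) : \bar R := iint N f 0.

Definition nullRn (A : set (Rn R N)) : Prop :=
  borelRn A /\ intRn (fun x => (\1_A x)%:E) = 0%E.

Fixpoint iterD (vs : seq (Rn R N)) (f : Rn R N -> R) : Rn R N -> R :=
  match vs with
  | [::] => f
  | v :: vs' => 'D_v (iterD vs' f)
  end.
Definition smooth (f : Rn R N -> R) : Prop :=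
  forall vs : seq (Rn R N), continuous (iterD vs f : Rn R N -> R^o) /\
    forall x v, derivable (iterD vs f) x v.

Definition Cc_infty (Om : set (Rn R N)) (f : Rn R N -> R) : Prop :=
  smooth f /\ compact (closure [set x | f x != 0]) /\
  closure [set x | f x != 0] `<=` Om.

Definition smooth_bounded_domain (Om : set (Rn R N)) : Prop :=
  [/\ open Om, connected Om, Om !=set0,
      (exists C : R, forall x, Om x -> enorm x <= C) &
      forall x0, (closure Om `\` Om) x0 ->
        exists (r : R) (psi : Rn R N -> R), [/\ 0 < r, smooth psi,
          (forall x, ball x0 r x -> (Om x <-> psi x < 0)) &
          (forall x, ball x0 r x -> psi x = 0 -> exists v, 'D_v psi x != 0)]].
End Defs.

Definition young_m (R : realType) (m : R -> R) : Prop :=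
  [/\ continuous (m : R^o -> R^o), {homo m : x y / x < y}, (forall y, exists x, m x = y),
      m 0 = 0 & (m : R^o -> R^o) x @[x --> +oo] --> +oo].

Definition YoungM (R : realType) (m : R -> R) (t : R) : R :=
  fine (\int[@lebesgue_measure R]_(tau in `[0%R, `|t|%R]) (m tau)%:E)%E.

Definition m_low (R : realType) (m : R -> R) : R :=
  inf [set t * m t / YoungM m t | t in `]0, +oo[].
Definition m_up_finite (R : realType) (m : R -> R) : Prop :=
  has_ubound [set t * m t / YoungM m t | t in `]0, +oo[].

Definition cond_S (R : realType) (M : R -> R) : Prop :=
  forall a b th : R, 0 <= a -> 0 <= b -> 0 <= th <= 1 ->
    M (Num.sqrt (th * a + (1 - th) * b)) <=
      th * M (Num.sqrt a) + (1 - th) * M (Num.sqrt b).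

Section Spaces.
Variables (R : realType) (N : nat) (M : R -> R) (s : R).
Implicit Types (u : Rn R N -> R).

Definition modular u (l : R) : \bar R :=
  intRn (fun x => (M (u x / l))%:E).
Definition smodular u (l : R) : \bar R :=
  intRn (fun x => intRn (fun y =>
    (M ((u x - u y) / (l * enorm (x - y) `^ s)) / enorm (x - y) `^ N%:R)%:E)).

Definition luxnorm u : R := inf [set l : R | 0 < l /\ (modular u l <= 1)%E].
Definition seminorm u : R := inf [set l : R | 0 < l /\ (smodular u l <= 1)%E].
Definition WsMnorm u : R := luxnorm u + seminorm u.

Definition WsM u : Prop :=
  [/\ borel_fun u, (exists l : R, 0 < l /\ (modular u l < +oo)%E) &
      (smodular u 1 < +oo)%E].

Definition WsM0t (Om : set (Rn R N)) u : Prop :=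
  [/\ WsM u,
      (forall e : R, 0 < e -> exists phi, Cc_infty Om phi /\
          WsMnorm (fun x => u x - phi x) < e) &
      exists Z, nullRn Z /\ [set x | ~ Om x /\ u x != 0] `<=` Z].
End Spaces.

Definition primG (R : realType) (N : nat) (g : Rn R N -> R -> R) x (t : R) : R :=
  if 0 <= t then fine (\int[@lebesgue_measure R]_(tau in `[0%R, t]) (g x tau)%:E)%E
  else - fine (\int[@lebesgue_measure R]_(tau in `[t, 0%R]) (g x tau)%:E)%E.

Definition caratheodory (R : realType) (N : nat) (Om : set (Rn R N))
    (g : Rn R N -> R -> R) : Prop :=
  (forall t, borel_fun (fun x => g x t * \1_Om x)) /\
  (forall x, Om x -> continuous (g x : R^o -> R^o)).

Definition I_lam (R : realType) (N : nat) (M : R -> R) (s : R) (Om : set (Rn R N))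
    (g : Rn R N -> R -> R) (lam : R) (u : Rn R N -> R) : \bar R :=
  (smodular M s u 1 - lam%:E * intRn (fun x => (primG g x (u x) * \1_Om x)%:E))%E.

(* Main.v *)
Require Import Defs.
From mathcomp Require Import all_boot all_order all_algebra.
From mathcomp Require Import all_classical all_reals all_analysis.
Import Order.TTheory GRing.Theory Num.Theory.
Local Open Scope ring_scope.
Local Open Scope classical_set_scope.
From mathcomp Require Import ring lra measurable_realfun.
Set Implicit Arguments. Unset Strict Implicit.


Section MeasRn.
Variables (R : realType) (N : nat).

Definition cylG : set (set (Rn R N)) :=
  [set A | exists (i : 'I_N) (B : set R), measurable B /\ A = [set x : Rn R N | B (x ord0 i)]].
Definition SRn := g_sigma_algebraType cylG.

Lemma cyl_meas i (B : set R) : measurable B ->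
  measurable ([set x | B (x ord0 i)] : set SRn).
Proof. by move=> mB; apply: sub_sigma_algebra; exists i, B. Qed.

Lemma bigcap_coord_meas (P : 'I_N -> R -> Prop) :
  (forall i, measurable [set t | P i t]) ->
  measurable ([set x | forall i, P i (x ord0 i)] : set SRn).
Proof.
move=> mP.
have -> : ([set x | forall i, P i (x ord0 i)] : set SRn) =
   \bigcap_(i in [set: 'I_N]) [set x | P i (x ord0 i)].
  by apply/seteqP; split => x /= H i; [move=> _; exact: H | exact: H].
apply: fin_bigcap_measurable => //.
move=> i _; exact: (cyl_meas i (mP i)).
Qed.

Definition box (c : 'rV[rat]_N) (r : rat) : set (Rn R N) :=
  [set x | forall i, ratr (c ord0 i) - ratr r < x ord0 i < ratr (c ord0 i) + ratr r].

Lemma box_meas c r : measurable (box c r : set SRn).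
Proof.
apply: (@bigcap_coord_meas (fun i t =>
  ratr (c ord0 i) - ratr r < t < ratr (c ord0 i) + ratr r)) => i.
have -> : [set t : R | ratr (c ord0 i) - ratr r < t < ratr (c ord0 i) + ratr r] =
  `](ratr (c ord0 i) - ratr r), (ratr (c ord0 i) + ratr r)[%classic.
  by apply/seteqP; split => t /=; rewrite in_itv.
exact: measurable_itv.
Qed.

Lemma open_meas (U : set (Rn R N)) : open U -> measurable (U : set SRn).
Proof.
move=> oU.
pose A (n : nat) : set SRn :=
  match unpickle n : option ('rV[rat]_N * rat) with
  | Some (c, r) => if `[< box c r `<=` U >] then box c r else set0
  | None => set0 end.
have -> : (U : set SRn) = \bigcup_n A n.
  apply/seteqP; split => [x Ux|]; last first.
    move=> x [n _]; rewrite /A; case: (unpickle n) => [[c r]|//].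
    by case: asboolP => // H /H.
  have : nbhs x U by apply: oU.
  move=> /nbhs_ballP [e e0 He].
  have e2 : (0:R) < e / 2 by rewrite divr_gt0.
  have [r] := rat_in_itvoo e2; rewrite in_itv /= => /andP [r0 re].
  have : forall i : 'I_N, exists q : rat, x ord0 i - ratr r < ratr q < x ord0 i + ratr r.
    move=> i; have h : x ord0 i - ratr r < x ord0 i + ratr r.
      by rewrite ltrBlDr -addrA ltrDl; exact: addr_gt0.
    by have [q] := rat_in_itvoo h; rewrite in_itv /= => hq; exists q.
  case/fin_all_exists => f Hf.
  exists (pickle (\row_i f i, r)) => //; rewrite /A pickleK.
  have sub : box (\row_i f i) r `<=` U.
    move=> y yb; apply: He; split => //; move=> i j; rewrite (ord1 i) /=.
    move: (yb j) (Hf j); rewrite !mxE => /andP [y1 y2] /andP [x1 x2].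
    rewrite /ball /=.
    have -> : e = e / 2 + e / 2 by rewrite -splitr.
    rewrite ltr_norml; apply/andP; split.
      by rewrite opprD; lra.
    by lra.
  case: asboolP => // _.
  move=> i; rewrite mxE; move: (Hf i) => /andP [h1 h2].
  by apply/andP; split; lra.
apply: bigcupT_measurable => n; rewrite /A.
case: (unpickle n) => [[c r]|//].
by case: asboolP => _ //; apply: box_meas.
Qed.

Lemma borel_meas (A : set (Rn R N)) : borelRn A -> measurable (A : set SRn).
Proof.
move=> bA; apply: (smallest_sub (@sigma_algebra_measurable _ SRn) _ bA).
by move=> U; apply: open_meas.
Qed.

Lemma borel_fun_meas (u : Rn R N -> R) : borel_fun u -> measurable_fun setT (u : SRn -> R).
Proof. by move=> bu _ B mB; rewrite setTI; apply: borel_meas; apply: bu. Qed.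

End MeasRn.


Section Iint.
Variables (R : realType) (N : nat).
Local Notation SRn := (SRn R N).

Lemma setcoordE (x : Rn R N) k t i :
  setcoord x k t ord0 i = if (i : nat) == k then t else x ord0 i.
Proof. by rewrite /setcoord mxE. Qed.

Lemma setcoord_meas2 k :
  measurable_fun setT (fun p : SRn * R => (setcoord p.1 k p.2 : SRn)).
Proof.
apply: (@measurability _ _ _ SRn setT _ (@cylG R N)); first by [].
move=> _ [_ [i [B [mB ->]]] <-].
rewrite setTI.
have [ik|ik] := eqVneq (i : nat) k.
  have -> : (fun p : SRn * R => (setcoord p.1 k p.2 : SRn)) @^-1`
      [set x : Rn R N | B (x ord0 i)] = setT `*` B.
    by apply/seteqP; split => -[x t]; rewrite /preimage /setX /= setcoordE ik eqxx // => -[].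
  exact: measurableX.
have -> : (fun p : SRn * R => (setcoord p.1 k p.2 : SRn)) @^-1`
    [set x : Rn R N | B (x ord0 i)] = ([set x : SRn | B (x ord0 i)]) `*` setT.
  by apply/seteqP; split => -[x t]; rewrite /preimage /setX /= setcoordE (negPf ik) // => -[].
apply: measurableX => //; exact: cyl_meas.
Qed.

Lemma setcoord_meas1 (x : Rn R N) k :
  measurable_fun setT (fun t : measurableTypeR R => (setcoord x k t : SRn)).
Proof.
have h := setcoord_meas2 k.
exact: (measurableT_comp h (pair1_measurable (x : SRn))).
Qed.

Lemma iint_meas (k : nat) (F : Rn R N -> \bar R) :
  measurable_fun setT (F : SRn -> \bar R) -> (forall x, (0 <= F x)%E) ->
  measurable_fun setT (iint k F : SRn -> \bar R) /\ (forall x, (0 <= iint k F x)%E).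
Proof.
move=> mF F0; elim: k => [//|k [IH1 IH2]] /=.
split; last by move=> x; apply: integral_ge0 => t _; exact: IH2.
have := @measurable_fun_fubini_tonelli_F _ _ SRn _ R (@lebesgue_measure R)
  (fun p : SRn * R => iint k F (setcoord p.1 k p.2)).
apply.
  exact: (measurableT_comp IH1 (setcoord_meas2 k)).
by move=> p; exact: IH2.
Qed.

Lemma iint_ge0 (k : nat) (F : Rn R N -> \bar R) : (forall x, (0 <= F x)%E) ->
  forall x, (0 <= iint k F x)%E.
Proof.
move=> F0; elim: k => [//|k IH] x /=.
by apply: integral_ge0 => t _; exact: IH.
Qed.

Lemma iintD (k : nat) (F G : Rn R N -> \bar R) :
  measurable_fun setT (F : SRn -> \bar R) -> (forall x, (0 <= F x)%E) ->
  measurable_fun setT (G : SRn -> \bar R) -> (forall x, (0 <= G x)%E) ->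
  forall x, iint k (fun y => F y + G y)%E x = (iint k F x + iint k G x)%E.
Proof.
move=> mF F0 mG G0; elim: k => [//|k IH] x /=.
under eq_integral do rewrite IH.
apply: ge0_integralD => //.
- by move=> t _; apply: iint_ge0.
- exact: (measurableT_comp (iint_meas k mF F0).1 (setcoord_meas1 x k)).
- by move=> t _; apply: iint_ge0.
- exact: (measurableT_comp (iint_meas k mG G0).1 (setcoord_meas1 x k)).
Qed.

Lemma iintZ (k : nat) (c : R) (F : Rn R N -> \bar R) : 0 <= c ->
  measurable_fun setT (F : SRn -> \bar R) -> (forall x, (0 <= F x)%E) ->
  forall x, iint k (fun y => c%:E * F y)%E x = (c%:E * iint k F x)%E.
Proof.
move=> c0 mF F0; elim: k => [//|k IH] x /=.
under eq_integral do rewrite IH.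
apply: ge0_integralZl => //.
- exact: (measurableT_comp (iint_meas k mF F0).1 (setcoord_meas1 x k)).
- by move=> t _; apply: iint_ge0.
Qed.

Lemma le_integral_nm (f g : R -> \bar R) : (forall t, (0 <= f t)%E) ->
  (forall t, (f t <= g t)%E) ->
  (\int[@lebesgue_measure R]_(t in [set: R]) f t <=
   \int[@lebesgue_measure R]_(t in [set: R]) g t)%E.
Proof.
move=> f0 fg.
have g0 : forall t, (0 <= g t)%E by move=> t; exact: le_trans (f0 t) (fg t).
rewrite !ge0_integralTE //.
apply: le_ereal_sup => _ [h /= hf <-]; exists h => //= t.
exact: le_trans (hf t) (fg t).
Qed.

Lemma iint_le (k : nat) (F G : Rn R N -> \bar R) : (forall x, (0 <= F x)%E) ->
  (forall x, (F x <= G x)%E) -> forall x, (iint k F x <= iint k G x)%E.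
Proof.
move=> F0 FG; elim: k => [//|k IH] x /=.
apply: le_integral_nm => t; first exact: iint_ge0.
exact: IH.
Qed.

End Iint.


Section Cube.
Variables (R : realType) (N : nat).
Local Notation SRn := (SRn R N).

Definition cubeK (a b : R) (k : nat) : set (Rn R N) :=
  [set x | forall i : 'I_N, (k <= i)%N -> a <= x ord0 i <= b].

Lemma cubeK_meas a b k : measurable (cubeK a b k : set SRn).
Proof.
apply: (@bigcap_coord_meas R N (fun i t => (k <= i)%N -> a <= t <= b)) => i.
have h : measurable [set t : R | (k <= i)%N -> a <= t <= b].
  case: (leqP k i) => ki.
    have -> : [set t : R | true -> a <= t <= b] = `[a, b]%classic.
      by apply/seteqP; split => t /=; rewrite in_itv /=; [apply | move=> ? ?].
    exact: measurable_itv.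
  have -> : [set t : R | false -> a <= t <= b] = setT.
    by apply/seteqP; split => t //= _.
  exact: measurableT.
exact: h.
Qed.

Lemma iint_cube a b k : a <= b -> (k <= N)%N -> forall x,
  iint k (fun y => (\1_(cubeK a b 0) y)%:E) x = ((b - a) ^+ k * \1_(cubeK a b k) x)%:E.
Proof.
move=> ab; elim: k => [_ x|k IH kN x] /=; first by rewrite expr0 mul1r.
have kN' : (k <= N)%N by apply: ltnW.
under eq_integral => t _ do rewrite IH //.
pose c := (b - a) ^+ k * \1_(cubeK a b k.+1) x.
have E : forall t, ((b - a) ^+ k * \1_(cubeK a b k) (setcoord x k t))%:E =
    (c%:E * (\1_(`[a, b]%classic) t)%:E)%E.
  move=> t; rewrite -EFinM /c -mulrA; congr (_ * _)%:E.
  rewrite !indicE.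
  have H : (setcoord x k t \in cubeK a b k) = (x \in cubeK a b k.+1) && (t \in `[a, b]%classic).
    apply/idP/idP.
      rewrite inE => H; apply/andP; split.
        rewrite inE => i ki; move: (H i (ltnW ki)); rewrite setcoordE.
        by rewrite gtn_eqF.
      have /H : (k <= Ordinal kN)%N by [].
      by rewrite setcoordE eqxx inE /= in_itv.
    case/andP; rewrite !inE => Hx; rewrite /= in_itv /= => Ht i ki.
    rewrite setcoordE; case: eqP => // ik.
    apply: Hx; rewrite ltn_neqAle ki andbT; apply/eqP => ik'; apply: ik; by rewrite ik'.
  by rewrite H -mulnb natrM.
under eq_integral => t _ do rewrite E.
have mI : measurable (`[a, b]%classic : set (measurableTypeR R)) by exact: measurable_itv.
rewrite ge0_integralZl //; last first.
- rewrite lee_fin /c; apply: mulr_ge0; [apply: exprn_ge0; lra | by rewrite indicE].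
- apply/measurable_EFinP.
  exact: (@measurable_indic _ (measurableTypeR R) R setT _ mI).
rewrite integral_indic //.
rewrite setIT.
have L : lebesgue_measure (`[a, b]%classic : set (measurableTypeR R)) = (if a < b then (b - a)%:E else 0%E).
  by rewrite lebesgue_measure_itv /= lte_fin.
first [rewrite L | (rewrite /= L) | (change (lebesgue_measure `[a, b]%classic) with (if a < b then (b - a)%:E else 0%E))].
case: ltgtP ab => // [ab _|<- _].
  by rewrite /c -EFinM; congr (_%:E); rewrite exprSr; ring.
by rewrite mule0 subrr expr0n /= mul0r.
Qed.

Lemma intRn_cube a b : a <= b ->
  intRn (fun y => (\1_(cubeK a b 0) y)%:E) = ((b - a) ^+ N)%:E.
Proof.
move=> ab; rewrite /intRn iint_cube // indicE.
have -> : ((0 : Rn R N) \in cubeK a b N) by rewrite inE => i; rewrite leqNgt ltn_ord.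
by rewrite mulr1.
Qed.

End Cube.


Section Young.
Variables (R : realType) (m : R -> R).
Hypothesis ym : young_m m.

Lemma m_nd : {homo m : x y / x <= y}.
Proof.
case: ym => _ mh _ _ _ x y; rewrite le_eqVlt => /predU1P [->//|xy].
by apply/ltW/mh.
Qed.

Lemma m_ge0 t : 0 <= t -> 0 <= m t.
Proof. by case: ym => _ _ _ m0 _ t0; rewrite -m0; apply: m_nd. Qed.

Lemma m_meas : measurable_fun (setT : set (measurableTypeR R)) m.
Proof. exact: (nondecreasing_measurable measurableT m_nd). Qed.

Lemma mE_meas (D : set (measurableTypeR R)) :
  measurable_fun D (fun t => (m t)%:E).
Proof.
apply/measurable_EFinP; apply: measurable_funS m_meas => //.
Qed.

Lemma intm_ge0 a : (0 <= \int[@lebesgue_measure R]_(tau in `[0%R, a]) (m tau)%:E)%E.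
Proof.
apply: integral_ge0 => t; rewrite /= in_itv /= => /andP [t0 _].
by rewrite lee_fin m_ge0.
Qed.

Lemma intm_le a : 0 <= a ->
  (\int[@lebesgue_measure R]_(tau in `[0%R, a]) (m tau)%:E <= (m a * a)%:E)%E.
Proof.
move=> a0.
have mI : measurable (`[0%R, a]%classic : set (measurableTypeR R)) by exact: measurable_itv.
apply: (@le_trans _ _ (\int[@lebesgue_measure R]_(tau in `[0%R, a]) (cst (m a)%:E tau))%E).
  apply: ge0_le_integral => //.
  - move=> t; rewrite /= in_itv /= => /andP [t0 _]; by rewrite lee_fin m_ge0.
  - exact: mE_meas.
  - move=> t; rewrite /= in_itv /= => /andP [t0 ta]; by rewrite lee_fin m_nd.
rewrite integral_cst //.
have L : lebesgue_measure (`[0%R, a]%classic : set (measurableTypeR R)) = (a - 0)%:E.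
  rewrite lebesgue_measure_itv /= lte_fin; case: ltgtP a0 => //.
  by move=> <- _; rewrite subrr.
first [rewrite L | (rewrite /= L)]; rewrite subr0 -EFinM; exact: le_refl.
Qed.

Lemma intm_fin a : 0 <= a ->
  (\int[@lebesgue_measure R]_(tau in `[0%R, a]) (m tau)%:E)%E \is a fin_num.
Proof.
move=> a0; rewrite ge0_fin_numE; last exact: intm_ge0.
by rewrite (le_lt_trans (@intm_le a a0)) // ltry.
Qed.

Lemma YM_ge0 t : 0 <= YoungM m t.
Proof. exact/fine_ge0/intm_ge0. Qed.

Lemma YM_abs t : YoungM m `|t| = YoungM m t.
Proof. by rewrite /YoungM normr_id. Qed.

Lemma YM_mono a b : `|a| <= `|b| -> YoungM m a <= YoungM m b.
Proof.
move=> ab; rewrite /YoungM; apply: fine_le; try exact: intm_fin.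
have mI (c : R) : measurable (`[0%R, c]%classic : set (measurableTypeR R)) by exact: measurable_itv.
apply: ge0_subset_integral => //.
- exact: mE_meas.
- move=> t; rewrite /= in_itv /= => /andP [t0 _]; by rewrite lee_fin m_ge0.
- move=> t; rewrite /= !in_itv /= => /andP [t0 ta]; rewrite t0 /=; exact: le_trans ta ab.
Qed.

Lemma YM_meas : measurable_fun setT (YoungM m).
Proof.
pose Mp (v : R) := YoungM m ((v + `|v|) / 2).
have pp (v : R) : 0 <= (v + `|v|) / 2.
  apply: divr_ge0 => //; have [v0|v0] := leP 0 v.
    by rewrite ger0_norm //; lra.
  by rewrite ltr0_norm //; lra.
have Mnd : {homo Mp : x y / x <= y}.
  move=> x y xy; apply: YM_mono.
  rewrite (ger0_norm (pp x)) (ger0_norm (pp y)).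
  have [x0|x0] := leP 0 x; have [y0|y0] := leP 0 y.
  - by rewrite !ger0_norm //; lra.
  - lra.
  - by rewrite ltr0_norm // ger0_norm //; lra.
  - by rewrite !ltr0_norm //; lra.
have -> : YoungM m = Mp \o (@Num.norm _ R).
  apply/funext => t /=; rewrite /Mp normr_id.
  have -> : (`|t| + `|t|) / 2 = `|t| by field.
  by rewrite YM_abs.
apply: measurableT_comp; last exact: normr_measurable.
exact: (nondecreasing_measurable measurableT Mnd).
Qed.

End Young.


Section Young2.
Variables (R : realType) (m : R -> R) (q : R).
Hypothesis ym : young_m m.
Hypothesis mlow : 1 < m_low m.
Hypothesis q0 : 0 < q.
Hypothesis lim : (fun t => `|t| `^ q / YoungM m t) x @[x --> +oo] --> 0.

Lemma YM_pos t : 0 < t -> 0 < YoungM m t.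
Proof.
move=> t0; rewrite lt_neqAle YM_ge0 // andbT; apply/eqP => M0.
have : m_low m <= 0.
  have -> : (0 : R) = t * m t / YoungM m t by rewrite -M0 invr0 mulr0.
  apply: ge_inf.
    exists 0 => _ [s /= s0 <-]; move: s0; rewrite in_itv /= andbT => s0.
    apply: divr_ge0; [apply: mulr_ge0; [exact: ltW | apply: m_ge0 => //; exact: ltW] | exact: YM_ge0].
  by exists t => //=; rewrite in_itv /= andbT.
by move=> h; have := lt_le_trans mlow h; rewrite ltr10.
Qed.

Lemma growth : exists T : R, 0 < T /\
  forall tau, T <= `|tau| -> `|tau| `^ q <= YoungM m tau.
Proof.
have := @cvgr_lt R R _ _ (fun t : R => `|t| `^ q / YoungM m t) 0 lim 1 ltr01.
move=> [T0 [T0r HT]].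
exists (`|T0| + 1); split; first by rewrite ltr_pwDr // normr_ge0.
move=> tau Ht.
have tT : T0 < `|tau|.
  apply: lt_le_trans Ht; apply: le_lt_trans (ler_norm T0) _; rewrite ltrDl; exact: ltr01.
have tpos : 0 < `|tau| by apply: lt_le_trans Ht; rewrite ltr_pwDr // normr_ge0.
have Mpos : 0 < YoungM m `|tau| by apply: YM_pos.
move: (HT _ tT); rewrite normr_id ltr_pdivrMr // mul1r YM_abs => h.
exact: ltW.
Qed.

Lemma ptwise_bound T E v : 0 < T -> 0 < E ->
  (forall tau, T <= `|tau| -> `|tau| `^ q <= YoungM m tau) ->
  `|v| `^ q <= E `^ q * (YoungM m (v / E) + T `^ q).
Proof.
move=> T0 E0 HT.
have -> : `|v| = `|v / E| * E by rewrite normrM normrV ?unitfE ?gt_eqF // (gtr0_norm E0) divfK ?gt_eqF.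
rewrite (powRM _ (normr_ge0 _) (ltW E0)) [X in X <= _]mulrC; apply: ler_wpM2l; first exact: powR_ge0.
have [h|h] := leP T `|v / E|.
  by apply: ler_wpDr; [exact: powR_ge0 | exact: HT].
apply: ler_wpDl; first exact: YM_ge0.
apply: ge0_ler_powR; rewrite ?nnegrE ?normr_ge0 ?ltW //.
Qed.

End Young2.


Section Geom.
Variables (R : realType) (N : nat).

Lemma coord_le_enorm (x : Rn R N) i : `|x ord0 i| <= enorm x.
Proof.
rewrite /enorm -sqrtr_sqr ler_sqrt; last by apply: sumr_ge0 => j _; exact: sqr_ge0.
rewrite (bigD1 i) //= lerDl; apply: sumr_ge0 => j _; exact: sqr_ge0.
Qed.

Lemma enorm_le (z : Rn R N) K : 0 <= K -> (forall i, `|z ord0 i| <= K) ->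
  enorm z <= Num.sqrt (N%:R * K ^+ 2).
Proof.
move=> K0 Hz; rewrite /enorm ler_sqrt; last by apply: mulr_ge0 => //; exact: sqr_ge0.
apply: (@le_trans _ _ (\sum_(i < N) K ^+ 2)).
  apply: ler_sum => i _; rewrite -real_normK ?num_real //.
  by rewrite ler_sqr ?nnegrE ?normr_ge0.
by rewrite sumr_const card_ord mulr_natl.
Qed.

End Geom.


Lemma kbound (R : realType) (m : R -> R) (ym : young_m m) (s D e n v : R) :
  0 < s -> 0 <= n -> 1 <= e -> e <= D ->
  YoungM m (v / D `^ s) / D `^ n <= YoungM m (v / e `^ s) / e `^ n.
Proof.
move=> s0 n0 e1 eD.
have e0 : 0 <= e by apply: le_trans e1; exact: ler01.
have D0 : 0 <= D by apply: le_trans eD.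
have es0 : 0 < e `^ s by apply: powR_gt0; apply: lt_le_trans e1; exact: ltr01.
have Es0 : 0 < D `^ s by apply: powR_gt0; apply: lt_le_trans (le_trans e1 eD); exact: ltr01.
have esE : e `^ s <= D `^ s by apply: ge0_ler_powR => //; exact: ltW.
have en0 : 0 < e `^ n by apply: powR_gt0; apply: lt_le_trans e1; exact: ltr01.
have enP : e `^ n <= D `^ n by apply: ge0_ler_powR.
have Dn0 : 0 < D `^ n by apply: powR_gt0; apply: lt_le_trans (le_trans e1 eD); exact: ltr01.
apply: ler_pM.
- exact: YM_ge0.
- by rewrite invr_ge0; exact: powR_ge0.
- apply: (YM_mono ym); rewrite !normrM !normrV ?unitfE ?gt_eqF //.
  rewrite (gtr0_norm es0) (gtr0_norm Es0).
  apply: ler_wpM2l; first exact: normr_ge0.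
  by rewrite lef_pV2 ?posrE.
- by rewrite lef_pV2 // posrE.
Qed.


Unset Implicit Arguments. Set Strict Implicit.

Theorem lemma4p1 (R : realType) (N : nat) (Om : set (Rn R N)) (s : R)
  (m : R -> R) (p q : R) (g : Rn R N -> R -> R) (C0 C1 C2 : R) :
  smooth_bounded_domain Om ->
  0 < s < 1 ->
  young_m m ->
  1 < m_low m -> m_up_finite m ->
  cond_S (YoungM m) ->
  1 < p < N%:R ->
  1 < q -> q < N%:R * p / (N%:R - p) -> q < m_low m ->
  (fun t => `|t| `^ q / YoungM m t) x @[x --> +oo] --> 0 ->
  caratheodory Om g ->
  0 < C0 -> 0 < C1 -> 0 < C2 ->
  (forall x t, Om x -> `|g x t| <= C0 * `|t| `^ (q - 1)) ->
  (forall x t, Om x ->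
     C1 * `|t| `^ q <= primG g x t /\ primG g x t <= C2 * `|t| `^ q) ->
  exists lams : R, 0 < lams /\
    forall lam : R, 0 < lam < lams ->
      exists rho alpha : R, [/\ 0 < rho, 0 < alpha &
        forall u : Rn R N -> R, WsM0t (YoungM m) s Om u ->
          seminorm (YoungM m) s u = rho ->
          (alpha%:E <= I_lam (YoungM m) s Om g lam u)%E].
Proof.
move=> [oOm _ _ [C HC] _] /andP [s0 s1] ym mlow _ _ /andP [p1 pN] q1 _ _ lim _
  C0p C1p C2p _ hG.
have q0 : 0 < q by lra.
have N0 : (0 < N)%N.
  rewrite lt0n; apply/negP => /eqP N0; rewrite N0 in pN; lra.
pose i0 : 'I_N := Ordinal N0.
pose C' := `|C|.
have C'0 : 0 <= C' by exact: normr_ge0.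
have Omb : forall x, Om x -> forall i, `|x ord0 i| <= C'.
  move=> x Ox i; apply: le_trans (coord_le_enorm x i) _.
  exact: le_trans (HC x Ox) (ler_norm C).
pose K := 2 * C' + 2.
pose D := Num.sqrt (N%:R * K ^+ 2).
have D1 : 1 <= D.
  rewrite /D -{1}sqrtr1 ler_sqrt; last first.
    by apply: mulr_ge0; rewrite ?ler0n ?sqr_ge0.
  have N1 : 1 <= (N%:R : R) by rewrite ler1n.
  have K2 : 2 <= K by rewrite /K; lra.
  have K4 : 1 <= K ^+ 2 by rewrite expr2; nra.
  have h : 0 <= (N%:R - 1) * (K ^+ 2 - 1) by apply: mulr_ge0; lra.
  nra.
pose E := D `^ s.
have E0 : 0 < E by apply: powR_gt0; lra.
pose P := D `^ N%:R.
have P0 : 0 < P by apply: powR_gt0; lra.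
have [T [T0 HT]] := growth ym mlow lim.
pose far := @cubeK R N (C' + 1) (C' + 2) 0.
pose big := @cubeK R N (- C') C' 0.
have Ombig : forall x, Om x -> big x.
  by move=> x Ox i _; rewrite -ler_norml; apply: Omb.
have farnOm : forall y, far y -> ~ Om y.
  move=> y fy Oy; move: (Omb y Oy i0) (fy i0 isT); rewrite ler_norml.
  move=> /andP [_ h1] /andP [h2 _]; lra.
have fardist : forall x y, Om x -> far y -> 1 <= enorm (x - y) <= D.
  move=> x y Ox fy; apply/andP; split.
    apply: le_trans (coord_le_enorm (x - y) i0); rewrite !mxE.
    move: (Omb x Ox i0) (fy i0 isT); rewrite ler_norml => /andP [h1 h2] /andP [h3 h4].
    rewrite ler0_norm; lra.
  apply: enorm_le; first by rewrite /K; lra.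
  move=> i; rewrite !mxE.
  move: (Omb x Ox i) (fy i isT); rewrite !ler_norml => /andP [h1 h2] /andP [h3 h4].
  rewrite /K; apply/andP; split; lra.
pose V := (C' - - C') ^+ N.
pose a := C2 * E `^ q.
have a0 : 0 <= a by apply: mulr_ge0; [lra | exact: powR_ge0].
have V0 : 0 <= V by apply: exprn_ge0; lra.
have aP0 : 0 <= a * P by apply: mulr_ge0 => //; exact: ltW.
have aTV0 : 0 <= a * T `^ q * V by apply: mulr_ge0 => //; apply: mulr_ge0 => //; exact: powR_ge0.
pose Q := a * P + a * T `^ q * V + 1.
have Q0 : 0 < Q by rewrite /Q; lra.
exists (1 / (4 * Q)); split; first by apply: divr_gt0; lra.
move=> lam /andP [lam0 lamlt].
have lamQ : lam * Q < 1 / 4.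
  by move: lamlt; rewrite ltr_pdivlMr; [lra | lra].
have X0 : lam * (a * P) < 1 / 4.
  have := mulr_ge0 (ltW lam0) aTV0; move: lamQ; rewrite /Q; nra.
have Y0 : lam * (a * T `^ q * V) < 1 / 4.
  have := mulr_ge0 (ltW lam0) aP0; move: lamQ; rewrite /Q; nra.
exists 2, (1 / 2); split; [lra | lra |].
move=> u [[bu _ Sfin] _ [Z [[bZ Z0] HZ]]] semi2.
have mOm : measurable (Om : set (SRn R N)) := open_meas oOm.
have mu_ : measurable_fun setT (u : SRn R N -> R) := borel_fun_meas bu.
pose phi x := YoungM m (u x / E) * \1_Om x.
have mphi : measurable_fun setT (phi : SRn R N -> R).
  apply: measurable_funM; last exact: measurable_indic.
  apply: measurableT_comp (YM_meas ym) _.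
  apply: measurable_funM => //; exact: measurable_cst.
have mPhi : measurable_fun setT ((fun x => (phi x)%:E) : SRn R N -> \bar R).
  exact/measurable_EFinP.
have Phi0 : forall x, (0 <= (phi x)%:E)%E.
  by move=> x; rewrite lee_fin; apply: mulr_ge0; [exact: YM_ge0 | rewrite indicE].
have S1 : (1 < smodular (YoungM m) s u 1)%E.
  rewrite ltNge; apply/negP => Sle.
  have : seminorm (YoungM m) s u <= 1.
    apply: ge_inf; first by exists 0 => l [l0 _]; exact: ltW.
    by split => //; exact: ltr01.
  rewrite semi2; lra.
have Sge0 : (0 <= smodular (YoungM m) s u 1)%E.
  apply: iint_ge0 => x; apply: iint_ge0 => y; rewrite lee_fin.
  by apply: divr_ge0; [exact: YM_ge0 | exact: powR_ge0].
pose su := fine (smodular (YoungM m) s u 1).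
have SE : smodular (YoungM m) s u 1 = su%:E.
  by rewrite fineK // ge0_fin_numE.
have su1 : 1 < su by move: S1; rewrite SE lte_fin.
have mfar : measurable (far : set (SRn R N)) by exact: cubeK_meas.
have mZ : measurable (Z : set (SRn R N)) := borel_meas bZ.
have mfZ : measurable (far `\` Z : set (SRn R N)) by exact: measurableD.
have mfZE : measurable_fun setT ((fun y => (\1_(far `\` Z) y)%:E) : SRn R N -> \bar R).
  by apply/measurable_EFinP; exact: measurable_indic.
have mZE : measurable_fun setT ((fun y => (\1_Z y)%:E) : SRn R N -> \bar R).
  by apply/measurable_EFinP; exact: measurable_indic.
have ind0 : forall (A : set (Rn R N)) y, (0 <= (\1_A y : R)%:E)%E.
  by move=> A y; rewrite lee_fin indicE.
have one_far : (1 <= intRn (fun y => (\1_(far `\` Z) y)%:E))%E.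
  have e1 : intRn (fun y => (\1_far y)%:E) = 1%:E.
    rewrite /far intRn_cube; last lra.
    by congr EFin; rewrite (_ : C' + 2 - (C' + 1) = 1) ?expr1n //; ring.
  move: Z0; rewrite -e1 /intRn => Z0.
  have := iintD N mfZE (ind0 _) mZE (ind0 _) 0.
  rewrite Z0 adde0 => <-.
  apply: (iint_le N) => // y.
  rewrite -EFinD lee_fin !indicE.
  have [yZ|yZ] := pselect (Z y).
    rewrite (mem_set yZ); apply: (@le_trans _ _ 1); first by case: (_ \in far); rewrite ?ler01 ?lexx.
    by apply: ler_wpDl; [exact: ler0n | exact: lexx].
  have [yf|yf] := pselect (far y).
    by rewrite (mem_set yf) mem_set //= (memNset yZ) addr0.
  by rewrite (memNset yf) (memNset yZ) /= addr0; apply: ler0n.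
have kge0 : forall x y, (0 <= (YoungM m ((u x - u y) / (1 * enorm (x - y) `^ s)) /
     enorm (x - y) `^ N%:R)%:E)%E.
  by move=> x y; rewrite lee_fin; apply: divr_ge0; [exact: YM_ge0 | exact: powR_ge0].
have inner : forall x, (((1 / P) * phi x)%:E <= intRn (fun y =>
    (YoungM m ((u x - u y) / (1 * enorm (x - y) `^ s)) / enorm (x - y) `^ N%:R)%:E))%E.
  move=> x; have [Ox|nOx] := pselect (Om x); last first.
    rewrite /phi indicE (memNset nOx) !mulr0; exact: iint_ge0.
  rewrite /phi indicE (mem_set Ox) mulr1.
  pose c := YoungM m (u x / E) / P.
  have c0 : 0 <= c by apply: divr_ge0; [exact: YM_ge0 | exact: ltW].
  apply: (@le_trans _ _ (c%:E * intRn (fun y => (\1_(far `\` Z) y)%:E))%E).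
    rewrite (_ : 1 / P * _ = c); last by rewrite /c mul1r mulrC.
    rewrite -[X in (X <= _)%E]mule1; apply: lee_wpmul2l => //; by rewrite lee_fin.
  rewrite /intRn -(iintZ N c0 mfZE (ind0 _) 0).
  apply: (iint_le N) => y.
    by rewrite -EFinM lee_fin mulr_ge0 // indicE.
  rewrite -EFinM lee_fin.
  have [yfz|nyfz] := pselect ((far `\` Z) y); last first.
    rewrite indicE (memNset nyfz) mulr0; apply: divr_ge0; [exact: YM_ge0 | exact: powR_ge0].
  rewrite indicE (mem_set yfz) mulr1.
  case: yfz => fy nZy.
  have uy0 : u y = 0.
    apply: contra_notP nZy => uy; apply: HZ; split; [exact: farnOm | exact/eqP].
  rewrite uy0 subr0 mul1r.
  have /andP [e1 eD] := fardist x y Ox fy.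
  exact: (kbound ym (u x) s0 (ler0n _ N) e1 eD).
have Slow : ((1 / P)%:E * intRn (fun x => (phi x)%:E) <= su%:E)%E.
  have P10 : 0 <= 1 / P by apply: divr_ge0; [exact: ler01 | exact: ltW].
  rewrite -SE /intRn -(iintZ N P10 mPhi Phi0 0).
  apply: (iint_le N) => x.
    by rewrite -EFinM lee_fin; apply: mulr_ge0 => //; rewrite -lee_fin; exact: Phi0.
  rewrite -EFinM; exact: inner.
have IPhile : (intRn (fun x => (phi x)%:E) <= (P * su)%:E)%E.
  have -> : intRn (fun x => (phi x)%:E) =
      (P%:E * ((1 / P)%:E * intRn (fun x => (phi x)%:E)))%E.
    by rewrite muleA -EFinM mul1r mulfV ?gt_eqF // mul1e.
  rewrite (EFinM P su); apply: lee_wpmul2l => //; rewrite lee_fin; exact: ltW.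
pose psi x := T `^ q * \1_Om x.
have mPsi : measurable_fun setT ((fun x => (psi x)%:E) : SRn R N -> \bar R).
  apply/measurable_EFinP; apply: measurable_funM; last exact: measurable_indic.
  exact: measurable_cst.
have Psi0 : forall x, (0 <= (psi x)%:E)%E.
  by move=> x; rewrite lee_fin; apply: mulr_ge0; [exact: powR_ge0 | rewrite indicE].
have mSum : measurable_fun setT
    ((fun x => (phi x)%:E + (psi x)%:E)%E : SRn R N -> \bar R).
  exact: emeasurable_funD.
have Sum0 : forall x, (0 <= (phi x)%:E + (psi x)%:E)%E.
  by move=> x; apply: adde_ge0.
have J0 : forall x, (0 <= (primG g x (u x) * \1_Om x)%:E)%E.
  move=> x; rewrite lee_fin; have [Ox|nOx] := pselect (Om x).
    rewrite indicE (mem_set Ox) mulr1; apply: le_trans (hG x (u x) Ox).1.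
    by apply: mulr_ge0; [exact: ltW | exact: powR_ge0].
  by rewrite indicE (memNset nOx) mulr0.
have Jle : (intRn (fun x => (primG g x (u x) * \1_Om x)%:E) <=
    a%:E * (intRn (fun x => (phi x)%:E) + intRn (fun x => (psi x)%:E)))%E.
  rewrite /intRn -(iintD N mPhi Phi0 mPsi Psi0 0) -(iintZ N a0 mSum Sum0 0).
  apply: (iint_le N) => // x.
  rewrite -EFinD -EFinM lee_fin; have [Ox|nOx] := pselect (Om x); last first.
    by rewrite /phi /psi indicE (memNset nOx) !mulr0 addr0 mulr0.
  rewrite /phi /psi indicE (mem_set Ox) !mulr1.
  apply: le_trans (hG x (u x) Ox).2 _.
  rewrite /a -mulrA; apply: ler_wpM2l; first exact: ltW.
  exact: (ptwise_bound ym q0 (u x) T0 E0 HT).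
have Psile : (intRn (fun x => (psi x)%:E) <= (T `^ q * V)%:E)%E.
  have e1 : intRn (fun y => (\1_big y)%:E) = V%:E.
    by rewrite /big intRn_cube //; lra.
  have mOmE : measurable_fun setT ((fun y => (\1_Om y)%:E) : SRn R N -> \bar R).
    by apply/measurable_EFinP; exact: measurable_indic.
  rewrite (EFinM (T `^ q) V) -e1 /intRn.
  rewrite (_ : (fun x => (psi x)%:E) = (fun x => (T `^ q)%:E * (\1_Om x)%:E)%E); last first.
    by apply/funext => x; rewrite /psi EFinM.
  rewrite (iintZ N (powR_ge0 T q) mOmE (ind0 _) 0).
  apply: lee_wpmul2l; first by rewrite lee_fin; exact: powR_ge0.
  apply: (iint_le N) => // y; rewrite lee_fin !indicE.
  have [Oy|nOy] := pselect (Om y).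
    by rewrite (mem_set Oy) (mem_set (Ombig y Oy)).
  by rewrite (memNset nOy) /= ler0n.
set J := intRn (fun x => (primG g x (u x) * \1_Om x)%:E).
have Jge0 : (0 <= J)%E by apply: iint_ge0.
have Jle2 : (J <= (a * (P * su + T `^ q * V))%:E)%E.
  apply: (le_trans Jle); rewrite (EFinM a) (EFinD (P * su)); apply: lee_wpmul2l; first by rewrite lee_fin.
  exact: leeD.
have JE : J = (fine J)%:E.
  rewrite fineK // ge0_fin_numE //; apply: le_lt_trans Jle2 _; exact: ltry.
have j0 : 0 <= fine J by rewrite -lee_fin -JE.
have jle : fine J <= a * (P * su + T `^ q * V) by rewrite -lee_fin -JE.
rewrite /I_lam SE -/J JE -EFinM -EFinB lee_fin.
have h1 : lam * fine J <= lam * (a * P) * su + lam * (a * T `^ q * V).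
  have -> : lam * (a * P) * su + lam * (a * T `^ q * V) = lam * (a * (P * su + T `^ q * V)) by ring.
  by apply: ler_wpM2l => //; exact: ltW.
have h2 : 0 <= (1 / 4 - lam * (a * P)) * (su - 1) by apply: mulr_ge0; lra.
lra.
Qed.
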